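(* Let $G$ be a transitive permutation group on a finite set $\Omega$ of size $n\ge2$. For $g\in G$ let $c(g)$ be the number of cycles (including fixed points) in the disjoint cycle decomposition of $g$, let $\ell(g)$ be the length of the shortest cycle of odd length in that decomposition ($\ell(g)=0$ if there is none), and for $i\ge0$ let $\mathcal{O}_i$ be the set of $g\in G$ whose cycle decomposition contains at most $i$ cycles of odd length. Let $r(G)$ be the number of orbits of $G$ on the set $\binom{\Omega}{\lfloor n/2\rfloor}$ of $\lfloor n/2\rfloor$-subsets of $\Omega$, and for $A\subseteq\Omega$ let $G_A$ be its setwise stabiliser. Suppose $\mathbf{m}(G)=\lceil(n+1)/2\rceil$. If $n$ is even, then \[ r(G)|G|=\sum_{A\in\binom{\Omega}{n/2}}|G_A|=\sum_{g\in\mathcal{O}_0}2^{c(g)}, \] and if $n$ is odd, then \[ r(G)|G|=\sum_{A\in\binom{\Omega}{\lfloor n/2\rfloor}}|G_A|\le\sum_{g\in\mathcal{O}_1}2^{c(g)-1}\ell(g)\le\left\lceil\frac n2\right\rceil\sum_{A\in\binom{\Omega}{\lfloor n/2\rfloor}}|G_A|=\left\lceil\frac n2\right\rceil r(G)|G|. \]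
   Context: A subset $A\subseteq\Omega$ is self-separable for $G$ if there exists $g\in G$ with $A\cap A^g=\emptyset$; $\mathbf{m}(G)$ is the minimum cardinality of a subset of $\Omega$ that is not self-separable for $G$. *)

(* Defs.v *)
From mathcomp Require Import all_boot all_fingroup.
Set Implicit Arguments. Unset Strict Implicit. Unset Printing Implicit Defensive.
Local Open Scope group_scope.

Section Defs.
Variable T : finType.
Implicit Types (G : {group {perm T}}) (A : {set T}) (g : {perm T}).

Definition self_separable G A : bool :=
  [exists g in G, [disjoint A & [set g x | x in A]]].

(* m(G): the minimum cardinality of a subset of T that is not self-separable
   (the whole set T is never self-separable when T is nonempty, so the
   default value #|T| of the minimum is only reached in that case). *)
Definition mG G : nat :=
  \big[minn/#|T|]_(A : {set T} | ~~ self_separable G A) #|A|.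

Definition ncycles g : nat := #|porbits g|.

Definition odd_cycles g : {set {set T}} := [set X in porbits g | odd #|X|].

Definition ell g : nat :=
  if odd_cycles g == set0 then 0
  else \big[minn/#|T|]_(X in odd_cycles g) #|X|.

Definition O_set G (i : nat) : {set {perm T}} :=
  [set g in G | #|odd_cycles g| <= i].

Definition ksubsets (k : nat) : {set {set T}} := [set A : {set T} | #|A| == k].

Definition rG G : nat :=
  #|[set orbit ('P^*)%act G A | A in ksubsets #|T|./2]|.

End Defs.

(* Main.v *)
Require Import Defs.
From mathcomp Require Import all_boot all_fingroup.
From mathcomp Require Import zify.
Set Implicit Arguments. Unset Strict Implicit. Unset Printing Implicit Defensive.

Lemma card_invol (U : finType) (f : U -> U) (P Q : pred U) :
  involutive f -> (forall x, P (f x) = Q x) ->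
  #|[set x | P x]| = #|[set x | Q x]|.
Proof.
move=> fK PQ.
have -> : [set x | P x] = f @: [set x | Q x].
  apply/setP=> x; rewrite inE; apply/idP/imsetP.
    by move=> Px; exists (f x); rewrite ?inE -?PQ fK.
  by case=> y; rewrite inE -PQ => Py ->.
by rewrite card_imset //; apply: inv_inj.
Qed.

Lemma cardsE' (U : finType) (P : pred U) : #|[set x | P x]| = \sum_x (P x : nat).
Proof.
rewrite -sum1_card big_mkcond; apply: eq_bigr => x _; rewrite inE; by case: (P x).
Qed.

Section Cyc.
Variable T : finType.
Variable g : {perm T}.

Definition solset (c : T -> bool) : {set {set T}} :=
  [set A : {set T} | [forall y, (g y \in A) == (y \in A) (+) c y]].
Definition sdiff (A B : {set T}) : {set T} := [set y | (y \in A) (+) (y \in B)].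

Lemma sdiffK B : involutive (sdiff^~ B).
Proof. by move=> A; apply/setP=> y; rewrite !inE addbK. Qed.

Lemma inv_porbit x y : (g y \in porbit g x) = (y \in porbit g x).
Proof.
rewrite -!eq_porbit_mem; have := porbit_perm g 1 y; rewrite expg1 => -> //.
Qed.

Lemma solP c (A : {set T}) : reflect (forall y, (g y \in A) = (y \in A) (+) c y) (A \in solset c).
Proof.
rewrite inE; apply: (iffP forallP) => H y; first exact/eqP/H.
by rewrite H.
Qed.

Lemma card_sol_inv c A0 : A0 \in solset c ->
  #|solset c| = #|solset (fun _ => false)|.
Proof.
move=> /solP H0.
have E : forall S : {set {set T}}, #|S| = #|[set A | A \in S]|.
  by move=> S; apply: eq_card => A; rewrite inE.
rewrite [LHS]E [RHS]E; symmetry.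
apply: (card_invol (sdiffK A0)) => A.
apply/solP/solP => H y.
  have := H y; rewrite !inE H0 addbF.
  by case: (g y \in A); case: (y \in A); case: (y \in A0); case: (c y).
rewrite !inE H0 H addbF.
by case: (g y \in A); case: (y \in A); case: (y \in A0); case: (c y).
Qed.

Lemma inv_closed (A : {set T}) x y : A \in solset (fun _ => false) -> x \in A ->
  y \in porbit g x -> y \in A.
Proof.
move=> /solP H Ax /porbitP [i ->]; elim: i => [|i IH]; first by rewrite expg0 perm1.
by rewrite expgSr permM H addbF.
Qed.

Lemma cover_porbit (P : {set {set T}}) y : P \subset porbits g ->
  (g y \in cover P) = (y \in cover P).
Proof.
move=> sP; apply/bigcupP/bigcupP => [[X XP gyX] | [X XP yX]]; exists X => //.
  have /imsetP [x _ Xe] := subsetP sP X XP.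
  by move: gyX; rewrite Xe inv_porbit.
have /imsetP [x _ Xe] := subsetP sP X XP.
by rewrite Xe inv_porbit -Xe.
Qed.

Lemma cover_inj_sub (P1 P2 : {set {set T}}) : P1 \subset porbits g -> P2 \subset porbits g ->
  cover P1 = cover P2 -> P1 \subset P2.
Proof.
move=> s1 s2 e; apply/subsetP=> X XP1.
have /imsetP [x _ Xe] := subsetP s1 X XP1.
have : x \in cover P2 by rewrite -e; apply/bigcupP; exists X; rewrite // Xe porbit_id.
move=> /bigcupP [Y YP2 xY].
have /imsetP [y _ Ye] := subsetP s2 Y YP2.
suff -> : X = Y by [].
by rewrite Xe Ye; apply/eqP; rewrite eq_porbit_mem -Ye.
Qed.

Lemma card_inv : #|solset (fun _ => false)| = 2 ^ #|porbits g|.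
Proof.
rewrite -card_powerset.
have -> : solset (fun _ => false) = cover @: powerset (porbits g).
  apply/setP=> A; apply/idP/imsetP.
    move=> HA; exists [set X in porbits g | X \subset A].
      by rewrite inE; apply/subsetP=> X; rewrite inE => /andP[].
    apply/setP=> y; apply/idP/bigcupP.
      move=> yA; exists (porbit g y); last exact: porbit_id.
      rewrite inE; apply/andP; split; first exact: imset_f.
      apply/subsetP=> z; exact: inv_closed.
    by move=> [X]; rewrite inE => /andP[_ /subsetP]; apply.
  move=> [P]; rewrite inE => sP ->; apply/solP=> y; rewrite addbF.
  exact: cover_porbit.
apply: card_in_imset => P1 P2; rewrite !inE => s1 s2 e.
by apply/eqP; rewrite eqEsubset (cover_inj_sub s1 s2 e) (cover_inj_sub s2 s1 (esym e)).
Qed.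

End Cyc.
Section Cyc.
Variable T : finType.
Variable g : {perm T}.

Lemma sol_nec c (A : {set T}) x : A \in solset g c ->
  ~~ odd #|[set y in porbit g x | c y]|.
Proof.
move=> /solP H.
set X := porbit g x.
pose P := [set y in X | y \in A].
pose Q := [set y in X | g y \in A].
have ePQ : #|P| = #|Q|.
  have -> : P = g @: Q.
    apply/setP=> z; rewrite inE; apply/andP/imsetP.
      move=> [zX zA]; exists ((g^-1)%g z); last by rewrite permKV.
      by rewrite inE -inv_porbit permKV zX zA.
    by move=> [y]; rewrite inE => /andP[yX gyA] ->; rewrite inv_porbit yX gyA.
  by rewrite card_imset //; apply: perm_inj.
have -> : [set y in X | c y] = (P :\: Q) :|: (Q :\: P).
  apply/setP=> y; rewrite !inE H.
  by case: (y \in X); case: (y \in A); case: (c y).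
rewrite cardsU.
have -> : (P :\: Q) :&: (Q :\: P) = set0.
  by apply/setP=> y; rewrite !inE; case: (y \in X); case: (y \in A); case: (g y \in A).
rewrite cards0 subn0 !cardsD ePQ setIC addnn.
by rewrite odd_double.
Qed.

End Cyc.
Section Cyc.
Variable T : finType.
Variable g : {perm T}.

Lemma sum_traject (c : T -> bool) r :
  \sum_(j < #|porbit g r|) (c (iter j g r) : nat) = #|[set y in porbit g r | c y]|.
Proof.
rewrite -[RHS]sum1_card.
rewrite (eq_bigl (fun y => (y \in traject g r #|porbit g r|) && c y)); last first.
  by move=> y; rewrite inE -porbit_traject.
rewrite big_mkcondr -big_uniq; last exact: uniq_traject_porbit.
rewrite (big_nth r) size_traject big_mkord.
apply: eq_bigr => j _; rewrite nth_traject //.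
Qed.

Definition rep x := odflt x [pick y in porbit g x].

Lemma rep_in x : rep x \in porbit g x.
Proof.
rewrite /rep; case: pickP => [y //|/(_ x)] /=.
by rewrite porbit_id.
Qed.

Lemma rep_eq x y : y \in porbit g x -> rep y = rep x.
Proof.
rewrite -eq_porbit_mem /rep => /eqP ->.
by case: pickP => //= /(_ x); rewrite porbit_id.
Qed.

Lemma porbit_rep x : porbit g (rep x) = porbit g x.
Proof. by apply/eqP; rewrite eq_porbit_mem rep_in. Qed.

Lemma sol_ex c : (forall x, ~~ odd #|[set y in porbit g x | c y]|) ->
  exists A, A \in solset g c.
Proof.
move=> Hc.
pose idx y := index y (traject g (rep y) #|porbit g y|).
pose A := [set y | odd (\sum_(j < idx y) c (iter j g (rep y)))].
exists A; apply/solP => y.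
have ry : rep (g y) = rep y by apply: rep_eq; rewrite inv_porbit porbit_id.
have Lg : porbit g (g y) = porbit g y.
  by apply/eqP; rewrite eq_porbit_mem inv_porbit porbit_id.
have Lr := porbit_rep y.
have yin : y \in traject g (rep y) #|porbit g y|.
  by rewrite -{1}Lr -porbit_traject Lr porbit_id.
have ilt : idx y < #|porbit g y|.
  by have := index_mem y (traject g (rep y) #|porbit g y|); rewrite size_traject yin.
have yi : iter (idx y) g (rep y) = y.
  by rewrite -(nth_traject _ ilt) nth_index.
have U : uniq (traject g (rep y) #|porbit g y|).
  by rewrite -{1}Lr uniq_traject_porbit.
rewrite !inE /idx ry Lg -/(idx y).
move: ilt yi yin U; set i := idx y; set r := rep y; set L := #|porbit g y| => ilt yi yin U.
have Hr := Hc r; rewrite -sum_traject porbit_rep -/L in Hr.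
case: (ltngtP i.+1 L) => [lt|gt|E].
- have -> : g y = nth r (traject g r L) i.+1 by rewrite nth_traject // -yi.
  rewrite index_uniq ?size_traject // big_ord_recr /= oddD yi.
  by case: (c y).
- by move: gt; rewrite ltnS leqNgt ilt.
have -> : g y = r by rewrite -yi -iterS E /L -Lr iter_porbit.
rewrite -E trajectS /= eqxx big_ord0 /=.
move: Hr; rewrite -E big_ord_recr /= oddD yi.
by case: (odd _); case: (c y).
Qed.
End Cyc.
Section Cyc.
Variable T : finType.
Variable g : {perm T}.

Lemma card_sol c : #|solset g c| =
  if [forall x, ~~ odd #|[set y in porbit g x | c y]|] then 2 ^ #|porbits g| else 0.
Proof.
case: forallP => H.
  have [A0 HA0] := sol_ex H.
  by rewrite (card_sol_inv HA0) card_inv.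
apply/eqP; rewrite cards_eq0; apply/eqP/setP => A; rewrite in_set0.
apply/negP => HA; apply: H => x; exact: sol_nec HA.
Qed.

Definition sep (A : {set T}) := [disjoint A & [set g x | x in A]].
Definition Dset (A : {set T}) := [set y | (y \notin A) && (g y \notin A)].

Lemma sepP (A : {set T}) : reflect (forall y, y \in A -> g y \notin A) (sep A).
Proof.
rewrite /sep disjoints_subset; apply: (iffP subsetP) => H.
  move=> y yA; apply/negP => gyA.
  by have := H _ gyA; rewrite inE imset_f.
move=> z zA; rewrite inE; apply/imsetP => [[x xA E]].
by have := H _ xA; rewrite -E zA.
Qed.

Lemma Dcard (A : {set T}) : sep A -> #|Dset A| + 2 * #|A| = #|T|.
Proof.
move=> /sepP sA.
have cB : #|g @^-1: A| = #|A| by apply: card_preimset; apply: perm_inj.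
have I0 : A :&: (g @^-1: A) = set0.
  apply/setP=> y; rewrite !inE; apply/negP => /andP[yA gyA].
  by have := sA _ yA; rewrite gyA.
have -> : Dset A = ~: (A :|: g @^-1: A).
  by apply/setP => y; rewrite !inE negb_or.
have := cardsC (A :|: g @^-1: A); rewrite cardsU I0 cards0 subn0 cB.
move=> <-; lia.
Qed.

Lemma even_equiv (A : {set T}) : ~~ odd #|T| ->
  (#|A| == #|T|./2) && sep A = (A \in solset g (fun _ => true)).
Proof.
move=> ev; have hn := odd_double_half #|T|; rewrite (negbTE ev) add0n in hn.
apply/idP/idP.
  move=> /andP[/eqP cA sA].
  have D0 := Dcard sA; rewrite cA in D0.
  have : #|Dset A| == 0 by apply/eqP; rewrite -hn -mul2n in D0; lia.
  rewrite cards_eq0 => /eqP D0'.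
  move/sepP: sA => sA.
  apply/solP => y; have : y \notin Dset A by rewrite D0' inE.
  rewrite !inE addbT; have := sA y.
  by case: (y \in A); case: (g y \in A) => // /(_ isT).
move=> /solP H.
have sA : sep A by apply/sepP => y yA; rewrite H yA.
rewrite sA andbT.
have D0 : Dset A = set0.
  by apply/setP => y; rewrite !inE H; case: (y \in A).
have := Dcard sA; rewrite D0 cards0 add0n -hn -mul2n => E.
apply/eqP; lia.
Qed.

Lemma odd_equiv (A : {set T}) y0 : odd #|T| ->
  [&& #|A| == #|T|./2, sep A & y0 \in Dset A] =
  (y0 \notin A) && (A \in solset g (fun y => y != y0)).
Proof.
move=> od; have hn := odd_double_half #|T|; rewrite od in hn.
apply/idP/idP.
  move=> /and3P[/eqP cA sA y0D].
  have D1 := Dcard sA; rewrite cA in D1.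
  have : #|Dset A| == 1 by apply/eqP; rewrite -hn -mul2n in D1; lia.
  move=> /cards1P [z Dz].
  move: y0D; rewrite Dz inE => /eqP Ez; subst z.
  have y0D : y0 \in Dset A by rewrite Dz inE.
  move: (y0D); rewrite inE => /andP[-> _] /=.
  move/sepP: sA => sA.
  apply/solP => y; have := sA y.
  have : (y \in Dset A) = (y == y0) by rewrite Dz inE.
  rewrite inE; case: eqP => [-> _|_].
    by move: y0D; rewrite inE => /andP[/negbTE -> /negbTE ->].
  by case: (y \in A); case: (g y \in A) => // _ /(_ isT).
move=> /andP[y0A /solP H].
have sA : sep A.
  apply/sepP => y yA; rewrite H yA /=.
  by case: eqP yA => // ->; rewrite (negbTE y0A).
have D1 : Dset A = [set y0].
  apply/setP => y; rewrite !inE H.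
  case: eqP => [->|_]; first by rewrite (negbTE y0A).
  by case: (y \in A).
rewrite sA D1 inE eqxx andbT /=.
have := Dcard sA; rewrite D1 cards1 -hn -mul2n => E.
apply/eqP; lia.
Qed.

End Cyc.
Section Cyc.
Variable T : finType.
Variable g : {perm T}.

Lemma cond_even :
  [forall x, ~~ odd #|[set y in porbit g x | true]|] = (odd_cycles g == set0).
Proof.
apply/forallP/eqP => H.
  apply/setP => X; rewrite inE in_set0; apply/negP => /andP[/imsetP[x _ ->] ox].
  have := H x.
  have -> : [set y in porbit g x | true] = porbit g x by apply/setP => y; rewrite !inE andbT.
  by rewrite ox.
move=> x.
have -> : [set y in porbit g x | true] = porbit g x by apply/setP => y; rewrite !inE andbT.
have : porbit g x \notin odd_cycles g by rewrite H in_set0.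
by rewrite inE imset_f.
Qed.

Lemma even_count : ~~ odd #|T| ->
  #|[set A in ksubsets T #|T|./2 | sep g A]| =
  if odd_cycles g == set0 then 2 ^ ncycles g else 0.
Proof.
move=> ev.
have -> : #|[set A in ksubsets T #|T|./2 | sep g A]| = #|solset g (fun _ => true)|.
  by apply: eq_card => A; rewrite -(even_equiv _ _ ev) !inE.
by rewrite card_sol cond_even.
Qed.

Lemma cond_y0 y0 :
  [forall x, ~~ odd #|[set y in porbit g x | y != y0]|] =
  (odd_cycles g == [set porbit g y0]).
Proof.
have E : forall x, [set y in porbit g x | y != y0] = porbit g x :\ y0.
  by move=> x; apply/setP => y; rewrite !inE andbC.
have F : forall x, (~~ odd #|porbit g x :\ y0|) = (odd #|porbit g x| == (y0 \in porbit g x)).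
  move=> x; rewrite (cardsD1 y0 (porbit g x)) oddD.
  by case: (y0 \in _); case: (odd _).
apply/forallP/eqP => H.
  apply/setP => X; rewrite !inE.
  case: (boolP (X \in porbits g)) => /= [/imsetP[x _ ->]|nX].
    have := H x; rewrite E F => /eqP ->.
    by rewrite -eq_porbit_mem eq_sym.
  apply/esym/negP => /eqP EX; apply: (negP nX); rewrite EX; exact: imset_f.
move=> x; rewrite E F.
have : (porbit g x \in odd_cycles g) = (porbit g x == porbit g y0) by rewrite H inE.
rewrite inE imset_f //= => ->.
by rewrite eq_porbit_mem porbit_sym.
Qed.

Lemma toggle_sol (c : T -> bool) (y0 : T) (A : {set T}) :
  (sdiff A (porbit g y0) \in solset g c) = (A \in solset g c).
Proof.
apply/solP/solP => H y.
  have := H y; rewrite !inE inv_porbit.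
  by case: (g y \in A); case: (y \in A); case: (y \in porbit g y0); case: (c y).
rewrite !inE inv_porbit H.
by case: (g y \in A); case: (y \in A); case: (y \in porbit g y0); case: (c y).
Qed.

Lemma half_count y0 : odd_cycles g == [set porbit g y0] ->
  #|[set A : {set T} | (y0 \notin A) && (A \in solset g (fun y => y != y0))]| =
  2 ^ (#|porbits g| - 1).
Proof.
move=> Hc.
set c := fun y => y != y0.
have Sc : #|solset g c| = 2 ^ #|porbits g| by rewrite card_sol cond_y0 Hc.
have Eq : #|[set A : {set T} | (y0 \notin A) && (A \in solset g c)]| =
          #|[set A : {set T} | (y0 \in A) && (A \in solset g c)]|.
  symmetry; apply: (card_invol (sdiffK (porbit g y0))) => A.
  by rewrite toggle_sol inE porbit_id addbT.
have Sp : #|solset g c| = #|[set A : {set T} | (y0 \notin A) && (A \in solset g c)]| +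
          #|[set A : {set T} | (y0 \in A) && (A \in solset g c)]|.
  have -> : #|solset g c| = #|[set A : {set T} | A \in solset g c]|.
    by apply: eq_card => A; rewrite [in RHS]inE.
  rewrite !cardsE' -big_split /=; apply: eq_bigr => A _.
  by case: (y0 \in A); case: (A \in solset g c).
have C1 : 0 < #|porbits g|.
  by apply/card_gt0P; exists (porbit g y0); apply: imset_f.
move: Sp; rewrite Sc -Eq -(prednK C1) expnS subn1 /=.
lia.
Qed.

End Cyc.
Section Cyc.
Variable T : finType.
Variable g : {perm T}.

Lemma odd_count : odd #|T| ->
  #|[set A in ksubsets T #|T|./2 | sep g A]| =
  if #|odd_cycles g| <= 1 then 2 ^ (ncycles g - 1) * ell g else 0.
Proof.
move=> od.
have step : forall A : {set T}, ((A \in ksubsets T #|T|./2) && sep g A : nat) =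
   \sum_y0 ([&& #|A| == #|T|./2, sep g A & y0 \in Dset g A] : nat).
  move=> A; rewrite -cardsE' inE.
  case: (boolP ((#|A| == #|T|./2) && sep g A)) => [/andP[/eqP cA sA]|H].
    have := Dcard sA; rewrite cA.
    have hn := odd_double_half #|T|; rewrite od in hn.
    move=> D1.
    have -> : #|[set x | #|T|./2 == #|T|./2 & sep g A && (x \in Dset g A)]| = #|Dset g A|.
      by apply: eq_card => y; rewrite inE eqxx sA.

    lia.
  apply/esym/eqP; rewrite cards_eq0; apply/eqP/setP => y; rewrite !inE.
  by move: H; case: (_ == _); case: (sep g A).
rewrite cardsE' (eq_bigr _ (fun A _ => step A)) exchange_big /=.
have step2 : forall y0, \sum_(A : {set T}) ([&& #|A| == #|T|./2, sep g A & y0 \in Dset g A] : nat)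
   = if odd_cycles g == [set porbit g y0] then 2 ^ (ncycles g - 1) else 0.
  move=> y0; rewrite -cardsE'.
  have -> : #|[set A : {set T} | [&& #|A| == #|T|./2, sep g A & y0 \in Dset g A]]| =
            #|[set A : {set T} | (y0 \notin A) && (A \in solset g (fun y => y != y0))]|.
    by apply: eq_card => A; rewrite [in RHS]inE -(odd_equiv _ _ _ od) inE.
  case: ifP => [H|H]; first by rewrite half_count.
  apply/eqP; rewrite cards_eq0; apply/eqP/setP => A; rewrite [in RHS]inE.
  apply/negP; rewrite inE => /andP[_ HA].
  have := cond_y0 g y0; rewrite H => /forallP Hn; apply: Hn => x.
  exact: sol_nec HA.
rewrite (eq_bigr _ (fun y0 _ => step2 y0)).
case: (boolP (#|odd_cycles g| == 1)) => [/cards1P [X EX]|N1].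
  have XO : X \in odd_cycles g by rewrite EX set11.
  move: (XO); rewrite inE => /andP[/imsetP[x1 _ EX1] oX].
  rewrite EX cards1 leqnn.
  have E2 : forall y0, ([set X] == [set porbit g y0]) = (y0 \in X).
    move=> y0; apply/eqP/idP => [/set1_inj ->|]; first exact: porbit_id.
    by rewrite EX1 -eq_porbit_mem => /eqP ->.
  rewrite (eq_bigr (fun y0 => if y0 \in X then 2 ^ (ncycles g - 1) else 0));
    last by move=> y0 _; rewrite E2.
  rewrite -big_mkcond /= sum_nat_const.
  have -> : ell g = #|X|.
    rewrite /ell EX; case: eqP => [E0|_].
      by have := set11 X; rewrite E0 in_set0.
    rewrite big_set1E.
    by apply/minn_idPl; apply: max_card.
  by rewrite mulnC.
rewrite big1; last first.
  move=> y0 _; case: ifP => // /eqP E.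
  by move: N1; rewrite E cards1.
case: ifP => // H.
have E0 : odd_cycles g = set0.
  by apply/eqP; rewrite -cards_eq0; move: H N1; case: #|_| => // [] [].
by rewrite /ell E0 eqxx muln0.
Qed.

End Cyc.

Lemma bigmin_le (I : finType) (P : pred I) (F : I -> nat) x j :
  P j -> \big[minn/x]_(i | P i) F i <= F j.
Proof.
move=> Pj; rewrite unlock.
have : j \in index_enum I by rewrite mem_index_enum.
elim: (index_enum I) => //= i s IH; rewrite inE => /orP[/eqP <-|js].
  by rewrite Pj geq_minl.
case: (P i); last exact: IH.
exact: leq_trans (geq_minr _ _) (IH js).
Qed.

Lemma cardsE2 (U : finType) (B : {set U}) (P : pred U) :
  #|[set x in B | P x]| = \sum_(x in B) (P x : nat).
Proof.
rewrite -sum1_card big_mkcond [RHS]big_mkcond; apply: eq_bigr => x _; rewrite !inE.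
by case: (x \in B); case: (P x).
Qed.

Section Grp.
Variable T : finType.
Variable G : {group {perm T}}.
Local Open Scope group_scope.

Lemma amv (A : {set T}) g0 : g0 \in G ->
  #|[set g in G | [set g x | x in A] == [set g0 x | x in A]]| = #|'N_G(A | 'P)|.
Proof.
move=> Gg0.
have := @amove_act _ _ _ 'P^* G A (subsetT _) g0 Gg0.
rewrite /amove /= => ->.
by rewrite card_rcoset astab1_set.
Qed.

Lemma amv_le (A B : {set T}) :
  #|[set g in G | [set g x | x in A] == B]| <= #|'N_G(A | 'P)|.
Proof.
case: (set_0Vmem [set g in G | [set g x | x in A] == B]) => [->|[g0]].
  by rewrite cards0.
rewrite inE => /andP[Gg0 /eqP E]; by rewrite -(amv A Gg0) E.
Qed.

Lemma rG_sum : (rG G * #|G| = \sum_(A in ksubsets T #|T|./2) #|'N_G(A | 'P)|)%N.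
Proof.
set K := ksubsets T #|T|./2.
rewrite (partition_big_imset (orbit 'P^* G)) /=.
rewrite /rG -/K -sum_nat_const; apply: eq_bigr => O /imsetP[A0 KA0 ->].
have sub : orbit 'P^* G A0 \subset K.
  apply/subsetP => A /orbitP[a _ <-]; move: KA0; rewrite !inE.
  by rewrite card_setact.
rewrite (eq_bigl (fun A => A \in orbit 'P^* G A0)); last first.
  move=> A /=; rewrite orbit_eq_mem andb_idl //; exact: (subsetP sub).
have cst : forall A, A \in orbit 'P^* G A0 -> #|'N_G(A | 'P)| = #|'N_G(A0 | 'P)|.
  move=> A AO.
  have e1 := card_orbit_stab 'P^* G A; have e2 := card_orbit_stab 'P^* G A0.
  rewrite !astab1_set in e1 e2.
  move/orbit_eqP: AO => eO; rewrite eO -e2 in e1.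
  apply/eqP; rewrite -(eqn_pmul2l (_ : 0 < #|orbit 'P^* G A0|)) ?e1 //.
  by apply/card_gt0P; exists A0; apply: orbit_refl.
rewrite (eq_bigr (fun _ => #|'N_G(A0 | 'P)|)) //.
rewrite sum_nat_const.
have := card_orbit_stab 'P^* G A0; rewrite astab1_set => ->.
by [].
Qed.

End Grp.

Section Grp.
Variable T : finType.
Variable G : {group {perm T}}.
Local Open Scope group_scope.

Lemma sep_sub (g : {perm T}) (A : {set T}) : sep g A ->
  [set g x | x in A] \subset ~: A /\ #|[set g x | x in A]| = #|A|.
Proof.
rewrite /sep disjoint_sym disjoints_subset => ->; split => //.
by apply: card_imset; apply: perm_inj.
Qed.

Lemma cardC_half (A : {set T}) : #|A| = #|T|./2 -> #|~: A| = uphalf #|T|.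
Proof.
move=> cA; have := cardsC A; have := odd_double_half #|T|; rewrite uphalf_half cA.
case: (odd #|T|) => /=; lia.
Qed.

Lemma sepN_le (A : {set T}) : self_separable G A ->
  exists2 g0, g0 \in G & sep g0 A /\
  #|'N_G(A | 'P)| <= #|[set g in G | sep g A]|.
Proof.
move=> /existsP [g0 /andP[Gg0 s0]]; exists g0 => //; split => //.
rewrite -(amv A Gg0); apply: subset_leq_card; apply/subsetP => g.
by rewrite !inE => /andP[-> /eqP E]; rewrite /sep E.
Qed.

Lemma sep_even_card (A : {set T}) : ~~ odd #|T| -> #|A| = #|T|./2 ->
  self_separable G A -> #|[set g in G | sep g A]| = #|'N_G(A | 'P)|.
Proof.
move=> ev cA /sepN_le [g0 Gg0 [s0 le]]; apply/eqP; rewrite eqn_leq le andbT.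
have cC := cardC_half cA; rewrite uphalf_half (negbTE ev) add0n -cA in cC.
have key : forall g, sep g A -> [set g x | x in A] = ~: A.
  move=> g /sep_sub [sb cg]; apply/eqP; rewrite eqEcard sb cC cg leqnn //.
rewrite -(amv A Gg0); apply: subset_leq_card; apply/subsetP => g.
rewrite !inE => /andP[-> sg] /=; by rewrite (key g sg) (key g0 s0).
Qed.

Lemma sep_odd_card (A : {set T}) : odd #|T| -> #|A| = #|T|./2 ->
  #|[set g in G | sep g A]| <= uphalf #|T| * #|'N_G(A | 'P)|.
Proof.
move=> od cA.
have cC := cardC_half cA.
rewrite cardsE2 -cC -sum_nat_const.
apply: (@leq_trans (\sum_(g in G) \sum_(x in ~: A)
                      (([set g y | y in A] == ~: A :\ x) : nat))).
  apply: leq_sum => g _; case: (boolP (sep g A)) => // sg.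
  rewrite -cardsE2; apply/card_gt0P.
  have [sb cg] := sep_sub sg.
  have : 0 < #|~: A :\: [set g y | y in A]|.
    rewrite cardsD (setIidPr sb) cg cC uphalf_half od cA; lia.
  move=> /card_gt0P [x]; rewrite inE => /andP[xg xC].
  exists x; rewrite inE xC /=.
  rewrite eqEcard; apply/andP; split.
    apply/subsetP => z zg; rewrite !inE.
    have := subsetP sb z zg; rewrite inE => ->; rewrite andbT.
    by apply: contraNneq xg => <-.
  have := cardsD1 x (~: A); rewrite xC cC cg uphalf_half od cA /=; lia.
rewrite exchange_big /=; apply: leq_sum => x _.
rewrite -cardsE2; exact: amv_le.
Qed.

End Grp.
Unset Implicit Arguments.
Local Open Scope group_scope.

Theorem lemma7p3 (T : finType) (G : {group {perm T}}) :
  2 <= #|T| ->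
  [transitive G, on [set: T] | 'P] ->
  mG G = uphalf (#|T|.+1) ->
  (~~ odd #|T| ->
     rG G * #|G| = \sum_(A in ksubsets T (#|T|./2)) #|'N_G(A | 'P)|
     /\ \sum_(A in ksubsets T (#|T|./2)) #|'N_G(A | 'P)|
        = \sum_(g in O_set G 0) 2 ^ ncycles g)%N
  /\
  (odd #|T| ->
     rG G * #|G| = \sum_(A in ksubsets T (#|T|./2)) #|'N_G(A | 'P)|
     /\ \sum_(A in ksubsets T (#|T|./2)) #|'N_G(A | 'P)|
        <= \sum_(g in O_set G 1) 2 ^ (ncycles g - 1) * ell g
     /\ \sum_(g in O_set G 1) 2 ^ (ncycles g - 1) * ell g
        <= uphalf #|T| * \sum_(A in ksubsets T (#|T|./2)) #|'N_G(A | 'P)|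
     /\ uphalf #|T| * \sum_(A in ksubsets T (#|T|./2)) #|'N_G(A | 'P)|
        = uphalf #|T| * (rG G * #|G|))%N.
Proof.
move=> _ _ hm.
set K := ksubsets T #|T|./2.
have ss : forall A, A \in K -> self_separable G A.
  move=> A; rewrite inE => /eqP cA; case: (boolP (self_separable G A)) => // ns.
  have := @bigmin_le _ (fun B : {set T} => ~~ self_separable G B) (fun A : {set T} => #|A|) #|T| A ns.
  rewrite -/(mG G) hm cA.
  have := uphalf_half #|T|.+1; have := odd_double_half #|T|; rewrite /=.
  rewrite uphalf_half; case: (odd #|T|) => /=; lia.
have sumN : (\sum_(A in K) #|[set g in G | sep g A]| =
             \sum_(g in G) #|[set A in K | sep g A]|)%N.
  rewrite (eq_bigr _ (fun A _ => cardsE2 _ _)) exchange_big /=.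
  by apply: eq_bigr => g _; rewrite cardsE2.
split.
  move=> ev; split; first exact: rG_sum.
  rewrite (eq_bigr (fun A => #|[set g in G | sep g A]|)); last first.
    move=> A KA; symmetry; apply: sep_even_card => //; last exact: ss.
    by move: KA; rewrite inE => /eqP.
  rewrite sumN (eq_bigr _ (fun g _ => even_count g ev)).
  rewrite big_mkcond [RHS]big_mkcond; apply: eq_bigr => g _.
  rewrite /O_set inE; case: (g \in G) => //=.
  by rewrite leqn0 cards_eq0.
move=> od.
have E1 : (\sum_(g in O_set G 1) 2 ^ (ncycles g - 1) * ell g =
           \sum_(A in K) #|[set g in G | sep g A]|)%N.
  rewrite sumN (eq_bigr _ (fun g _ => odd_count g od)).
  rewrite big_mkcond [RHS]big_mkcond; apply: eq_bigr => g _.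
  rewrite /O_set inE; case: (g \in G) => //=.
rewrite rG_sum; split => //; split; last split => //.
  rewrite E1; apply: leq_sum => A KA.
  by have [g0 _ [_ ->]] := sepN_le (ss A KA).
rewrite E1 big_distrr /=; apply: leq_sum => A KA.
apply: sep_odd_card => //.
by move: KA; rewrite inE => /eqP.
Qed.
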